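(* Let $|\cdot|$ denote the Euclidean norm on $\mathbb{R}^n$. Let $l_0,l_1,\bar l_0,\bar l_1\in\mathbb{R}^n$ satisfy $$|l_1-\bar l_0|\ge |l_1-l_0|,\qquad |\bar l_1-l_0|\ge |\bar l_1-\bar l_0|,$$ and $|l_1-l_0|=|\bar l_1-\bar l_0|$. For $t\in[0,1]$ write $l_t=(1-t)l_0+tl_1$ and $\bar l_t=(1-t)\bar l_0+t\bar l_1$. Then $$|l_1-\bar l_1|\le \frac{2}{t}\,|l_s-\bar l_t|\qquad\text{for all } 0<t\le s\le 1.$$ *)

(* Defs.v *)
From mathcomp Require Import all_boot all_order all_algebra.
Set Implicit Arguments. Unset Strict Implicit. Unset Printing Implicit Defensive.
Import Order.TTheory GRing.Theory Num.Theory.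
Local Open Scope ring_scope.

Definition enorm (R : rcfType) (n : nat) (v : 'rV[R]_n) : R :=
  Num.sqrt (\sum_(i < n) v 0 i ^+ 2).

Definition interp (R : rcfType) (n : nat) (l0 l1 : 'rV[R]_n) (t : R) : 'rV[R]_n :=
  (1 - t) *: l0 + t *: l1.

(* Main.v *)
Require Import Defs.
From mathcomp Require Import all_boot all_order all_algebra.
Import Order.TTheory GRing.Theory Num.Theory.
From mathcomp Require Import ring lra.
Local Open Scope ring_scope.

Lemma key (R : rcfType) (ww uu wu wv uv t s : R) :
  0 < t -> t <= s -> s <= 1 ->
  0 <= ww + 2*wu -> 0 <= ww - 2*wv -> 0 <= ww -> 0 <= 2*uu - 2*uv ->
  0 <= ww + 2*uu + 2*wu - 2*wv - 2*uv ->
  0 <= ww + (2*s - t)^+2 * uu + t^+2 * uu + 2*(2*s-t)*wu - 2*t*wv - 2*(2*s-t)*t*uv ->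
  t^+2 * (ww + 2*uu + 2*wu - 2*wv - 2*uv) <=
  4 * (ww + s^+2 * uu + t^+2 * uu + 2*s*wu - 2*t*wv - 2*s*t*uv).
Proof.
move=> t0 ts s1 hA hB hw hx hQ hG.
set P := ww + s^+2 * uu + t^+2 * uu + 2*s*wu - 2*t*wv - 2*s*t*uv.
set Pt := ww + t^+2 * uu + t^+2 * uu + 2*t*wu - 2*t*wv - 2*t*t*uv.
set Q := ww + 2*uu + 2*wu - 2*wv - 2*uv.
have hx' : 0 <= uu - uv by lra.
set G := ww + (2*s - t)^+2 * uu + t^+2 * uu + 2*(2*s-t)*wu - 2*t*wv - 2*(2*s-t)*t*uv in hG.
have e1 : 0 <= Pt - t^+2 * Q.
  have -> : Pt - t^+2 * Q = (1-t)*((1-t)*ww + t*((ww + 2*wu) + (ww - 2*wv))) by rewrite /Pt /Q; ring.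
  apply: mulr_ge0; first lra.
  apply: addr_ge0; apply: mulr_ge0; nra.
have e2 : 0 <= 2 * P + 2 * (s-t)^+2 * uu - Pt.
  have -> : 2 * P + 2 * (s-t)^+2 * uu - Pt = G by rewrite /P /Pt /G; ring.
  done.
have e3 : 0 <= P - (s-t)^+2 * uu.
  have [st1|st1] := lerP (s + t) 1.
    have -> : P - (s-t)^+2 * uu = s * (ww + 2*wu) + t * (ww - 2*wv) + (1 - s - t) * ww + (2*s*t) * (uu - uv)
      by rewrite /P; ring.
    apply: addr_ge0; [apply: addr_ge0; [apply: addr_ge0|]|]; apply: mulr_ge0; nra.
  have -> : P - (s-t)^+2 * uu = (1-t) * (ww + 2*wu) + (1-s) * (ww - 2*wv) + (s+t-1) * Q + (2*(1-s)*(1-t)) * (uu - uv)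
    by rewrite /P /Q; ring.
  apply: addr_ge0; [apply: addr_ge0; [apply: addr_ge0|]|]; apply: mulr_ge0; try nra; by rewrite /Q.
have E : 4*P - t^+2*Q = (Pt - t^+2*Q) + (2*P + 2*(s-t)^+2*uu - Pt) + 2*(P - (s-t)^+2*uu) by ring.
have : 0 <= 4*P - t^+2*Q.
  rewrite E; apply: addr_ge0; [apply: addr_ge0 => //|]; apply: mulr_ge0 => //.
by move=> h; rewrite subr_ge0 in h.
Qed.

Definition S3 {R : rcfType} {n : nat} (f g : 'I_n -> R) := \sum_(i < n) f i * g i.

Lemma sq3 (R : rcfType) (n : nat) (w u v : 'I_n -> R) (a b c : R) :
  \sum_(i < n) (a * w i + b * u i + c * v i) ^+ 2 =
  a^+2 * S3 w w + b^+2 * S3 u u + c^+2 * S3 v v + 2*a*b * S3 w u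
  + 2*a*c * S3 w v + 2*b*c * S3 u v.
Proof.
rewrite /S3 !mulr_sumr -!big_split /=; apply: eq_bigr => i _; ring.
Qed.

Lemma sq3_ge0 (R : rcfType) (n : nat) (w u v : 'I_n -> R) (a b c : R) :
  0 <= a^+2 * S3 w w + b^+2 * S3 u u + c^+2 * S3 v v + 2*a*b * S3 w u
  + 2*a*c * S3 w v + 2*b*c * S3 u v.
Proof. rewrite -sq3; apply: sumr_ge0 => i _; exact: sqr_ge0. Qed.

Theorem corollary3p3 (R : rcfType) (n : nat) (l0 l1 bl0 bl1 : 'rV[R]_n)
  (h1 : enorm (l1 - l0) <= enorm (l1 - bl0))
  (h2 : enorm (bl1 - bl0) <= enorm (bl1 - l0))
  (h3 : enorm (l1 - l0) = enorm (bl1 - bl0)) :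
  forall t s : R, 0 < t -> t <= s -> s <= 1 ->
    enorm (l1 - bl1) <= 2 / t * enorm (interp l0 l1 s - interp bl0 bl1 t).
Proof.
move=> t s t0 ts s1.
pose w := fun i => l0 0 i - bl0 0 i.
pose u := fun i => l1 0 i - l0 0 i.
pose v := fun i => bl1 0 i - bl0 0 i.
pose F a b c := a^+2 * S3 w w + b^+2 * S3 u u + c^+2 * S3 v v + 2*a*b * S3 w u
  + 2*a*c * S3 w v + 2*b*c * S3 u v.
have E : forall (x : 'rV[R]_n) a b c, (forall i, x 0 i = a * w i + b * u i + c * v i) ->
    enorm x = Num.sqrt (F a b c).
  move=> x a b c hx; rewrite /enorm /F -sq3; congr Num.sqrt.
  by apply: eq_bigr => i _; rewrite hx.
have F0 : forall a b c, 0 <= F a b c by move=> a b c; exact: sq3_ge0.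
rewrite (E _ 0 1 0) in h1 h3; last by move=> i; rewrite !mxE /u /w /v; ring.
rewrite (E _ 1 1 0) in h1; last by move=> i; rewrite !mxE /u /w /v; ring.
rewrite (E _ 0 0 1) in h2 h3; last by move=> i; rewrite !mxE /u /w /v; ring.
rewrite (E _ (-1) 0 1) in h2; last by move=> i; rewrite !mxE /u /w /v; ring.
rewrite (E _ 1 1 (-1)); last by move=> i; rewrite !mxE /u /w /v; ring.
rewrite (E _ 1 s (-t)); last by move=> i; rewrite /interp !mxE /u /w /v; ring.
rewrite ler_sqrt // in h1; rewrite ler_sqrt // in h2.
move/eqP: h3; rewrite eqr_sqrt // => /eqP h3.
have hv : S3 v v = S3 u u by move: h3; rewrite /F; lra.
have hA : 0 <= S3 w w + 2 * S3 w u by move: h1; rewrite /F; lra.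
have hB : 0 <= S3 w w - 2 * S3 w v by move: h2; rewrite /F hv; lra.
have hw : 0 <= S3 w w by have := F0 1 0 0; rewrite /F; lra.
have hx : 0 <= 2 * S3 u u - 2 * S3 u v by have := F0 0 1 (-1); rewrite /F hv; lra.
have hQ : 0 <= S3 w w + 2 * S3 u u + 2 * S3 w u - 2 * S3 w v - 2 * S3 u v.
  by have := F0 1 1 (-1); rewrite /F hv; lra.
have hG := F0 1 (2*s - t) (-t).
have K := @key R (S3 w w) (S3 u u) (S3 w u) (S3 w v) (S3 u v) t s t0 ts s1 hA hB hw hx hQ.
have K' : t^+2 * F 1 1 (-1) <= 4 * F 1 s (-t).
  have -> : F 1 1 (-1) = S3 w w + 2 * S3 u u + 2 * S3 w u - 2 * S3 w v - 2 * S3 u v.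
    by rewrite /F hv; ring.
  have -> : F 1 s (-t) = S3 w w + s^+2 * S3 u u + t^+2 * S3 u u + 2*s*S3 w u - 2*t*S3 w v - 2*s*t*S3 u v.
    by rewrite /F hv; ring.
  apply: K; move: hG; rewrite /F hv; lra.
have eq2 : 2 / t * Num.sqrt (F 1 s (-t)) = (2 * Num.sqrt (F 1 s (-t))) / t by rewrite mulrAC.
rewrite eq2 ler_pdivlMr //.
have -> : Num.sqrt (F 1 1 (-1)) * t = Num.sqrt (t^+2 * F 1 1 (-1)).
  rewrite sqrtrM ?sqr_ge0 // sqrtr_sqr ger0_norm ?(ltW t0) //; exact: mulrC.
have -> : 2 * Num.sqrt (F 1 s (-t)) = Num.sqrt (4 * F 1 s (-t)).
  have h4 : (4 : R) = 2 ^+ 2 by rewrite expr2 -natrM.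
  rewrite h4 sqrtrM ?sqr_ge0 // sqrtr_sqr ger0_norm //.
by rewrite ler_sqrt // mulr_ge0.
Qed.
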